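(* Let $j>0$, $\delta>0$ and $u,v\in\mathcal U_\delta$. Then $$F\big(0;|K^{(\delta)}u-K^{(\delta)}v|\big)\le F\big(0;|u-v|\big),\qquad F\big(0;|K^{(\delta)}u-u|\big)\le 2j\delta.$$
   Context: For a positive measure $\mu$ on $[0,1]$, $F(r;\mu)=\mu([r,1])$. $\mathcal U$ = measures $u=c_uD_0+\rho_u(r)dr$ with $c_u\ge0$, $\rho_u\in L^\infty([0,1],\mathbb R_+)$, $D_0$ the Dirac mass at $0$. For $u,v\in\mathcal U$, $|u-v|=|c_u-c_v|D_0+|\rho_u-\rho_v|$ (so $F(0;|u-v|)=|c_u-c_v|+\int_0^1|\rho_u-\rho_v|$). $\mathcal U_\delta=\{u\in\mathcal U:\int_0^1\rho_u>j\delta\}$, and $K^{(\delta)}u=j\delta D_0+\mathbf 1_{[0,R_\delta(u)]}u$ with $R_\delta(u)=\inf\{r:F(r;u)=j\delta\}$. *)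

(* Defs.v *)
From HB Require Import structures.
From mathcomp Require Import all_boot all_order all_algebra.
From mathcomp Require Import all_classical all_reals all_analysis.
Set Implicit Arguments. Unset Strict Implicit. Unset Printing Implicit Defensive.
Import Order.TTheory GRing.Theory Num.Theory.
Import numFieldNormedType.Exports.
Local Open Scope classical_set_scope.
Local Open Scope ring_scope.

(* An element u = c_u D_0 + rho_u(r) dr of the class U is represented by the
   pair (c_u, rho_u). *)
Definition I01 (R : realType) : set R := `[(0 : R), 1]%classic.

Definition umeasure (R : realType) := (R * (R -> R))%type.

Definition inU (R : realType) (u : umeasure R) : Prop :=
  0 <= u.1 /\ measurable_fun (@I01 R) u.2 /\
  (forall x, (@I01 R) x -> 0 <= u.2 x) /\
  (exists M : R, forall x, (@I01 R) x -> u.2 x <= M).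

Definition umeas (R : realType) (u : umeasure R) (A : set R) : \bar R :=
  ((u.1)%:E * \d_(0%R : R) A + \int[@lebesgue_measure R]_(x in A `&` (@I01 R)) (u.2 x)%:E)%E.

Definition F (R : realType) (r : R) (mu : set R -> \bar R) : \bar R :=
  mu `[r, 1]%classic.

Definition absd (R : realType) (u v : umeasure R) : umeasure R :=
  (`|u.1 - v.1|, fun x => `|u.2 x - v.2 x|).

Definition Udelta (R : realType) (j delta : R) (u : umeasure R) : Prop :=
  inU u /\ ((j * delta)%:E < \int[@lebesgue_measure R]_(x in (@I01 R)) (u.2 x)%:E)%E.

Definition Rdelta (R : realType) (j delta : R) (u : umeasure R) : R :=
  inf [set r : R | F r (umeas u) = (j * delta)%:E].

Definition Kdelta (R : realType) (j delta : R) (u : umeasure R) : umeasure R :=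
  (j * delta + \1_(`[0, Rdelta j delta u]%classic) 0 * u.1,
   fun x => \1_(`[0, Rdelta j delta u]%classic) x * u.2 x).

(* Main.v *)
Require Import Defs.
From HB Require Import structures.
From mathcomp Require Import all_boot all_order all_algebra.
From mathcomp Require Import all_classical all_reals all_analysis.
From mathcomp Require Import ring lra measurable_realfun.
Import Order.TTheory GRing.Theory Num.Theory.
Import numFieldNormedType.Exports.
Local Open Scope classical_set_scope.
Local Open Scope ring_scope.

Section S.
Variable R : realType.
Local Notation mu := (@lebesgue_measure R).
Local Notation D := (@I01 R).

Definition Int (f : R -> R) := (\int[mu]_(x in D) (f x)%:E)%E.

Lemma mD : measurable D. Proof. exact: measurable_itv. Qed.

Lemma IntD (f g : R -> R) : measurable_fun D f -> measurable_fun D g ->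
  (forall x, D x -> 0 <= f x) -> (forall x, D x -> 0 <= g x) ->
  Int (fun x => f x + g x) = (Int f + Int g)%E.
Proof.
move=> mf mg f0 g0; rewrite /Int -ge0_integralD//.
all: try exact: mD; try exact/measurable_EFinP.
Qed.

Lemma Int_le (f g : R -> R) : measurable_fun D f -> measurable_fun D g ->
  (forall x, D x -> 0 <= f x) -> (forall x, D x -> f x <= g x) ->
  (Int f <= Int g)%E.
Proof.
move=> mf mg f0 fg; apply: ge0_le_integral.
all: first [exact: mD | exact/measurable_EFinP | by move=> x Dx; rewrite lee_fin ?f0 ?fg].
Qed.

Lemma Int_ge0 (f : R -> R) : (forall x, D x -> 0 <= f x) -> (0 <= Int f)%E.
Proof. by move=> f0; apply: integral_ge0 => x Dx; rewrite lee_fin f0. Qed.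

Lemma Int_ind (a b M : R) : a <= b -> 0 <= M ->
  (Int (fun x => (M * \1_`[a, b] x)%R) <= ((M * (b - a))%R)%:E)%E.
Proof.
move=> ab M0; rewrite /Int.
under eq_integral do rewrite EFinM.
rewrite ge0_integralZl_EFin//; last 2 first.
- exact: mD.
- by apply/measurable_EFinP; apply: measurable_indic; exact: measurable_itv.
rewrite integral_indic; last exact: measurable_itv.
rewrite EFinM; apply: lee_wpmul2l; first by rewrite lee_fin.
apply: (le_trans (measureIl _ _ _)); [exact: measurable_itv| exact: mD|].
have := lebesgue_measure_itv `[a, b]; rewrite /= => ->.
case: ifPn => // _; first by rewrite lee_fin subr_ge0.
exact: mD.
Qed.


Lemma indic_itvE (a b x : R) :
  \1_`[a, b]%classic x = (if (a <= x) && (x <= b) then 1 else 0 : R).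
Proof. by rewrite indicE mem_setE in_itv /=; case: ifP. Qed.

Lemma D_E x : D x <-> 0 <= x <= 1.
Proof. by rewrite /I01 /= in_itv. Qed.

Lemma lip_cont (g : R -> R) (M : R) : 0 <= M ->
  (forall r s, `|g r - g s| <= M * `|r - s|) -> continuous (g : R -> R).
Proof.
move=> M0 L x; apply/cvgrPdist_le => e e0; apply/nbhs_normP.
have M1 : 0 < M + 1 by rewrite ltr_wpDl.
exists (e / (M + 1)); first by rewrite /= divr_gt0.
move=> y /= hy; apply: (le_trans (L x y)).
have h1 : M * `|x - y| <= M * (e / (M + 1)) by rewrite ler_wpM2l// ltW.
apply: (le_trans h1); rewrite mulrA ler_pdivrMr//; nra.
Qed.


Lemma mind (a b : R) : measurable_fun D (\1_`[a, b]%classic : R -> R).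
Proof. by apply: measurable_indic; exact: measurable_itv. Qed.

Section rho.
Variables (rho : R -> R) (M : R).
Hypothesis mrho : measurable_fun D rho.
Hypothesis rho0 : forall x, D x -> 0 <= rho x.
Hypothesis rhoM : forall x, D x -> rho x <= M.

Lemma M0 : 0 <= M.
Proof. have D0 : D 0 by apply/D_E; rewrite lexx ler01. exact: le_trans (rho0 _ D0) (rhoM _ D0). Qed.

Definition G r := Int (fun x => \1_`[r, 1]%classic x * rho x).

Lemma mG r : measurable_fun D (fun x => \1_`[r, 1]%classic x * rho x).
Proof. by apply: measurable_funM => //; exact: mind. Qed.

Lemma G_ge0 r : (0 <= G r)%E.
Proof. by apply: Int_ge0 => x Dx; rewrite mulr_ge0 ?rho0. Qed.

Lemma G_leM r : (G r <= M%:E)%E.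
Proof.
apply: (@le_trans _ _ (Int (fun x => (M * \1_`[0, 1]%classic x)%R))).
  apply: Int_le.
  - exact: mG.
  - by apply: measurable_funM => //; exact: mind.
  - by move=> x Dx; rewrite mulr_ge0 ?rho0.
  - move=> x /[dup] Dx /D_E h; rewrite !indic_itvE h mulr1.
    by case: ifP => _; rewrite ?mul0r ?mul1r ?M0 ?rhoM.
by have := @Int_ind 0 1 M ler01 M0; rewrite subr0 mulr1.
Qed.

Lemma G_fin r : G r \is a fin_num.
Proof. by rewrite ge0_fin_numE ?G_ge0// (le_lt_trans (G_leM r)) ?ltry. Qed.

Lemma G_mono r s : r <= s -> (G s <= G r)%E.
Proof.
move=> rs; apply: Int_le; [exact: mG|exact: mG| |].
  by move=> x Dx; rewrite mulr_ge0 ?rho0.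
move=> x Dx; rewrite !indic_itvE.
case: ifP => h; last by rewrite mul0r; case: ifP; rewrite ?mul1r ?mul0r ?rho0.
have -> : (r <= x) && (x <= 1) by move: h => /andP[sx ->]; rewrite (le_trans rs sx).
by [].
Qed.

Lemma G_lip r s : r <= s -> (G r <= G s + (M * (s - r))%:E)%E.
Proof.
move=> rs.
apply: (@le_trans _ _ (Int (fun x => \1_`[s, 1]%classic x * rho x
   + M * \1_`[r, s]%classic x))).
  apply: Int_le.
  - exact: mG.
  - by apply: measurable_funD; [exact: mG| apply: measurable_funM => //; exact: mind].
  - by move=> x Dx; rewrite mulr_ge0 ?rho0.
  - move=> x Dx; rewrite !indic_itvE.
    have := rho0 _ Dx; have := rhoM _ Dx; have := M0.
    move=> hM0 hM hr0.
    case: (boolP (r <= x)) => rx; case: (boolP (x <= 1)) => x1;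
    case: (boolP (s <= x)) => sx; case: (boolP (x <= s)) => xs;
    move: rx x1 sx xs; rewrite -?ltNge => rx x1 sx xs;
      rewrite /= ?mul1r ?mul0r ?mulr1 ?mulr0 ?add0r ?addr0; lra.
rewrite IntD; first last.
- by move=> x Dx; rewrite mulr_ge0 ?M0 // indic_itvE; case: ifP.
- by move=> x Dx; rewrite mulr_ge0 ?rho0.
- by apply: measurable_funM => //; exact: mind.
- exact: mG.
by apply: leeD => //; exact: (Int_ind _ _ _ rs M0).
Qed.

Definition g r := fine (G r).

Lemma g_lip r s : `|g r - g s| <= M * `|r - s|.
Proof.
wlog rs : r s / r <= s.
  move=> W; case: (boolP (r <= s)) => [rs|]; first exact: W.
  rewrite -ltNge => /ltW sr.
  by rewrite distrC [`|r - s|]distrC; exact: W.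
rewrite [`|r - s|]distrC [`|s - r|]ger0_norm ?subr_ge0//.
have h1 := G_lip _ _ rs; have h2 := G_mono _ _ rs.
rewrite /g; move: (G_fin r) (G_fin s) h1 h2.
case: (G r) => // a _; case: (G s) => // b _; rewrite /= !lee_fin => h1 h2.
rewrite ger0_norm; lra.
Qed.

Lemma g_cont : continuous (g : R -> R).
Proof. exact: (@lip_cont g M M0 g_lip). Qed.

End rho.


Lemma F_E (w : umeasure R) r :
  F r (umeas w) = ((w.1 * \1_`[r, 1]%classic 0)%:E + G w.2 r)%E.
Proof.
rewrite /F /umeas diracE indicE -EFinM; congr (_ + _)%E.
rewrite integral_mkcondl /G /Int; apply: eq_integral => x _.
by rewrite patchE indicE; case: ifP => _; rewrite ?mul1r ?mul0r.
Qed.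

Lemma G0 (rho : R -> R) : G rho 0 = Int rho.
Proof.
apply: eq_integral => x; rewrite inE => /D_E h.
by rewrite indic_itvE h mul1r.
Qed.

Lemma F0_E (w : umeasure R) : F 0 (umeas w) = ((w.1)%:E + Int w.2)%E.
Proof. by rewrite F_E G0 indic_itvE lexx ler01 mulr1. Qed.


Section Rprops.
Variables (u : umeasure R) (a M : R).
Hypothesis c0 : 0 <= u.1.
Hypothesis mrho : measurable_fun D u.2.
Hypothesis rho0 : forall x, D x -> 0 <= u.2 x.
Hypothesis rhoM : forall x, D x -> u.2 x <= M.
Hypothesis a0 : 0 < a.
Hypothesis ha : (a%:E < Int u.2)%E.

Let S := [set r : R | F r (umeas u) = a%:E].
Let Rd := inf S.


Let gE r : G u.2 r = (g u.2 r)%:E.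
Proof. by rewrite /g fineK// (@G_fin u.2 M mrho rho0 rhoM r). Qed.

Lemma Gle0 r : r <= 0 -> G u.2 r = Int u.2.
Proof.
move=> r0; rewrite -G0; apply: eq_integral => x; rewrite inE => /D_E /andP[x0 x1].
by rewrite !indic_itvE x0 x1 (le_trans r0 x0).
Qed.

Lemma S_pos r : S r -> 0 < r /\ G u.2 r = a%:E.
Proof.
rewrite /S /= F_E => h.
case: (ltP 0 r) => r0.
  have i0 : \1_`[r, 1]%classic (0:R) = 0 :> R by rewrite indic_itvE leNgt r0.
  by split => //; rewrite i0 mulr0 add0e in h.
exfalso; move: h; rewrite Gle0// => h.
have : (a%:E < (u.1 * \1_`[r, 1]%classic 0)%:E + Int u.2)%E.
  apply: (lt_le_trans ha); rewrite leeDr // lee_fin mulr_ge0 // indic_itvE; by case: ifP.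
by rewrite h ltxx.
Qed.


Let M0' : 0 <= M. Proof. exact: (@M0 u.2 M rho0 rhoM). Qed.

Lemma S_ne : exists c, S c.
Proof.
have gc := @g_cont u.2 M mrho rho0 rhoM.
have g0 : a < g u.2 0 by have := ha; rewrite -G0 gE lte_fin.
have g1 : g u.2 1 <= 0.
  have : (G u.2 1 <= 0%:E)%E.
    have h := @Int_ind 1 1 M (lexx _) M0'; rewrite subrr mulr0 in h.
    apply: le_trans h.
    apply: Int_le.
    - exact: (@mG u.2 mrho 1).
    - by apply: measurable_funM => //; exact: mind.
    - by move=> x Dx; rewrite mulr_ge0 ?rho0.
    - move=> x Dx; rewrite !indic_itvE; case: ifP => _; rewrite ?mul1r ?mul0r ?mulr1 ?mulr0 ?rhoM //.
  by rewrite gE lee_fin.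
have [c c01 gca] : exists2 c, c \in `[0, 1] & g u.2 c = a.
  apply: IVT => //; first exact: continuous_subspaceT.
  rewrite ge_min le_max; apply/andP; split; apply/orP.
  - by right; exact: (le_trans g1 (ltW a0)).
  - by left; exact: ltW.
move: c01; rewrite in_itv /= => /andP[c0' c1].
have cpos : 0 < c.
  rewrite lt_neqAle c0' andbT; apply/negP => /eqP c0E.
  by move: gca; rewrite -c0E => gca; move: g0; rewrite gca ltxx.
exists c; rewrite /S /= F_E gE gca.
have i0 : \1_`[c, 1]%classic (0:R) = 0 :> R by rewrite indic_itvE leNgt cpos.
by rewrite i0 mulr0 add0e.
Qed.

Lemma S_lb : lbound S 0.
Proof. by move=> r /S_pos [/ltW]. Qed.

Lemma Rd_ge0 : 0 <= Rd.
Proof. by apply: lb_le_inf; [exact: S_ne | exact: S_lb]. Qed.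

Lemma hinf : has_inf S.
Proof. by split; [exact: S_ne | exists 0; exact: S_lb]. Qed.

Lemma GRd : G u.2 Rd = a%:E.
Proof.
rewrite gE; congr (_%:E); apply/eqP; rewrite eq_le; apply/andP; split.
  apply/ler_addgt0Pr => e e0.
  have M1 : 0 < M + 1 by rewrite ltr_wpDl ?M0'.
  have [s Ss sRd] := inf_adherent (divr_gt0 e0 M1) hinf.
  have Rds : Rd <= s by apply: (ge_inf (proj2 hinf)).
  have := @G_lip u.2 M mrho rho0 rhoM Rd s Rds.
  rewrite (proj2 (S_pos _ Ss)) gE -EFinD lee_fin => h.
  apply: (le_trans h); rewrite lerD2l.
  have h1 : M * (s - Rd) <= M * (e / (M + 1)).
    rewrite ler_wpM2l ?M0' //; apply: ltW; rewrite ltrBlDl. exact: sRd.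
  apply: (le_trans h1); rewrite mulrA ler_pdivrMr//; have := M0'; nra.
have [c Sc] := S_ne.
have Rdc : Rd <= c by apply: (ge_inf (proj2 hinf)).
have := @G_mono u.2 mrho rho0 Rd c Rdc.
by rewrite (proj2 (S_pos _ Sc)) gE lee_fin.
Qed.

Lemma tailE : Int (fun x => (1 - \1_`[0, Rd]%classic x) * u.2 x) = a%:E.
Proof.
have := GRd; rewrite /G => <-.
have -> : Int (fun x => \1_`[Rd, 1]%classic x * u.2 x) =
    Int (fun x => (1 - \1_`[0, Rd]%classic x) * u.2 x + \1_`[Rd, Rd]%classic x * u.2 x).
  apply: eq_integral => x; rewrite inE => /D_E /andP[x0 x1]; congr (_%:E).
  rewrite !indic_itvE x0 x1 /= andbT -mulrDl; congr (_ * _).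
  have := Rd_ge0; case: (ltgtP x Rd) => xr //=; rewrite ?subrr ?subr0 ?add0r ?addr0 //.
rewrite IntD; first last.
- by move=> x Dx; rewrite mulr_ge0 ?rho0 // indic_itvE; case: ifP.
- by move=> x Dx; rewrite mulr_ge0 ?rho0 // indic_itvE; case: ifP; rewrite ?subr0 ?subrr.
- by apply: measurable_funM => //; exact: mind.
- apply: measurable_funM => //; apply: measurable_funB => //; exact: mind.
suff -> : Int (fun x => \1_`[Rd, Rd]%classic x * u.2 x) = 0%E by rewrite adde0.
apply/eqP; rewrite eq_le; apply/andP; split; last first.
  by apply: Int_ge0 => x Dx; rewrite mulr_ge0 ?rho0 // indic_itvE; case: ifP.
have h := @Int_ind Rd Rd M (lexx _) M0'; rewrite subrr mulr0 in h.
apply: le_trans h.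
apply: Int_le.
- by apply: measurable_funM => //; exact: mind.
- by apply: measurable_funM => //; exact: mind.
- by move=> x Dx; rewrite mulr_ge0 ?rho0 // indic_itvE; case: ifP.
- move=> x Dx; rewrite !indic_itvE; case: ifP => _; rewrite ?mul1r ?mul0r ?mulr1 ?mulr0 ?rhoM //.
Qed.

End Rprops.


Ltac mtac := repeat first [ exact: mind | assumption | apply: measurable_funM
  | apply: measurable_funB | apply: measurable_funD | exact: measurable_cst
  | apply: (measurableT_comp (@normr_measurable _ _)) ].

Lemma core (r1 r2 : R -> R) (R1 R2 : R) :
  measurable_fun D r1 -> measurable_fun D r2 ->
  (forall x, D x -> 0 <= r1 x) -> (forall x, D x -> 0 <= r2 x) -> R1 <= R2 ->
  Int (fun x => (1 - \1_`[0, R1]%classic x) * r1 x) =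
    Int (fun x => (1 - \1_`[0, R2]%classic x) * r2 x) ->
  Int (fun x => (1 - \1_`[0, R1]%classic x) * r1 x) \is a fin_num ->
  (Int (fun x => `|\1_`[0, R1]%classic x * r1 x - \1_`[0, R2]%classic x * r2 x|%R)
    <= Int (fun x => `|r1 x - r2 x|%R))%E.
Proof.
move=> m1 m2 p1 p2 R12 eqT finT.
have ind01 (A : set R) x : 0 <= 1 - \1_A x.
  by rewrite indicE; case: (x \in A); rewrite ?subrr ?subr0.
have H : (Int (fun x => `|\1_`[0, R1]%classic x * r1 x - \1_`[0, R2]%classic x * r2 x|%R)
   + Int (fun x => ((1 - \1_`[0, R2]%classic x) * r2 x)%R) <=
   Int (fun x => `|r1 x - r2 x|%R) + Int (fun x => ((1 - \1_`[0, R1]%classic x) * r1 x)%R))%E.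
  rewrite -!IntD; try (by mtac); try (by move=> x Dx; rewrite ?mulr_ge0 ?ind01 ?p1 ?p2).
  apply: Int_le; try (by mtac).
    by move=> x Dx; rewrite addr_ge0 ?mulr_ge0 ?ind01 ?p1 ?p2.
  move=> x /[dup] Dx /D_E /andP[x0 x1].
  have q1 := p1 _ Dx; have q2 := p2 _ Dx.
  have t : r2 x - r1 x <= `|r1 x - r2 x| by rewrite distrC ler_norm.
  rewrite !indic_itvE x0 /=.
  case: (boolP (x <= R1)) => h1; case: (boolP (x <= R2)) => h2;
    rewrite /= ?mul1r ?mul0r ?subrr ?subr0 ?addr0 ?add0r ?sub0r ?normrN ?mul0r.
  - by [].
  - by move: h2; rewrite (le_trans h1 R12).
  - by rewrite ger0_norm //; lra.
  - by rewrite normr0 add0r; lra.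
rewrite -(leeD2rE _ _ finT); move: H; by rewrite -eqT.
Qed.

End S.

Theorem mainTheorem12 (R : realType) (j delta : R) (u v : umeasure R) :
  0 < j -> 0 < delta -> Udelta j delta u -> Udelta j delta v ->
  (F 0 (umeas (absd (Kdelta j delta u) (Kdelta j delta v)))
     <= F 0 (umeas (absd u v)))%E /\
  (F 0 (umeas (absd (Kdelta j delta u) u)) <= (2 * j * delta)%:E)%E.
Proof.
move=> j0 d0 [[cu [mu [pu [Mu hMu]]]] hu] [[cv [mv [pv [Mv hMv]]]] hv].
have a0 : 0 < j * delta by rewrite mulr_gt0.
have Ru0 := @Rd_ge0 R u (j * delta) Mu cu mu pu hMu a0 hu.
have Rv0 := @Rd_ge0 R v (j * delta) Mv cv mv pv hMv a0 hv.
have Tu := @tailE R u (j * delta) Mu cu mu pu hMu a0 hu.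
have Tv := @tailE R v (j * delta) Mv cv mv pv hMv a0 hv.
rewrite /Kdelta /Rdelta; set Ru := inf _ in Ru0 Tu *; set Rv := inf _ in Rv0 Tv *.
have iu : \1_`[0, Ru]%classic (0:R) = 1 :> R by rewrite indic_itvE lexx Ru0.
have iv : \1_`[0, Rv]%classic (0:R) = 1 :> R by rewrite indic_itvE lexx Rv0.
split.
  rewrite !F0_E /= iu iv !mul1r.
  have -> : j * delta + u.1 - (j * delta + v.1) = u.1 - v.1 by ring.
  rewrite leeD2l //.
  case: (boolP (Ru <= Rv)) => RR.
    apply: core => //; first by rewrite Tu Tv.
    by rewrite Tu.
  move: RR; rewrite -ltNge => RR.
  have := @core R v.2 u.2 Rv Ru mv mu pv pu (ltW RR).
  rewrite Tu Tv => /(_ erefl isT) h.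
  have E1 : forall (f g : R -> R), f =1 g -> Int R f = Int R g by move=> f g /funext ->.
  have e1 : Int R (fun x => `|\1_`[0, Ru]%classic x * u.2 x - \1_`[0, Rv]%classic x * v.2 x|) =
    Int R (fun x => `|\1_`[0, Rv]%classic x * v.2 x - \1_`[0, Ru]%classic x * u.2 x|).
    by apply: E1 => x; rewrite distrC.
  have e2 : Int R (fun x => `|u.2 x - v.2 x|) = Int R (fun x => `|v.2 x - u.2 x|).
    by apply: E1 => x; rewrite distrC.
  by rewrite e1 e2.
rewrite F0_E /= iu mul1r.
have -> : j * delta + u.1 - u.1 = j * delta by ring.
rewrite (_ : Int R _ = Int R (fun x => (1 - \1_`[0, Ru]%classic x) * u.2 x)).
  rewrite Tu -EFinD lee_fin ger0_norm; last exact: ltW.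
  by have -> : 2 * j * delta = j * delta + j * delta by ring.
apply: eq_integral => x; rewrite inE => Dx; congr (_%:E).
have := pu _ Dx; rewrite indicE; case: (x \in _) => /= h.
  by rewrite mul1r !subrr mul0r normr0.
by rewrite mul0r subr0 sub0r normrN mul1r ger0_norm.
Qed.
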